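(* Let $G=(V,E)$ be a finite graph with couplings $J_e>0$, $p_e=1-e^{-2J_e}$. Let $\Omega=\{0,1\}^E$, $\Sigma=\{-1,+1\}^V$, $f:\Omega\to2^\Sigma$, $f(\omega)=\{\sigma\in\Sigma\mid\omega_e=0\ \forall e\notin S(\sigma)\}$. For $A\subset V$ with $|A|$ even let $\rho[\omega]\propto\mathbf{1}[\omega\in\mathcal{F}_A]\mathbb{P}_p[\omega]$ and $\gamma[\sigma]\propto1$. Let $\mathscr{P}$ be the probability measure on $\Omega\times\Sigma$ with $\mathscr{P}[\omega,\sigma]\propto\rho[\omega]\gamma[\sigma]\mathbf{1}[\sigma\in f(\omega)]$. Then: (a) The marginal of $\mathscr{P}$ on $\Sigma$ is $\mu^A$ given by $\mu^A[\sigma]\propto\mu[\sigma]\,\mathbb{P}_{S(\sigma),p}[\mathcal{F}_A]$. For each $\omega\in\mathcal{F}_A$, $\mathscr{P}[\cdot\mid\omega]$ is obtained by assigning independent uniform signs to the open clusters of $\omega$. (b) The marginal of $\mathscr{P}$ on $\Omega$ is $\phi_p[\cdot\mid\mathcal{F}_A]$. For each $\sigma$ with $S(\sigma)\in\mathcal{F}_A$, $\mathscr{P}[\cdot\mid\sigma]=\mathbb{P}_{S(\sigma),p}[\cdot\mid\mathcal{F}_A]$.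
   Context: Configurations are identified with sets of open edges; open clusters are the components of $(V,\omega)$, $\kappa(\omega)$ their number (isolated vertices included). $S(\sigma)=\{uv\in E\mid\sigma_u=\sigma_v\}$. $\partial F$ is the set of odd-degree vertices of $(V,F)$; $\mathcal{F}_A=\{\omega\subset E\mid\exists F\subset\omega,\ \partial F=A\}$. $\mathbb{P}_p$ is Bernoulli percolation on $E$ with parameters $(p_e)$; $\mathbb{P}_{H,p}$ is Bernoulli percolation with parameters $p$ on the edges of $H$ and all other edges closed. $\mu[\sigma]\propto\exp(\sum_{uv\in E}J_{uv}\sigma_u\sigma_v)$ is the Ising measure. $\phi_p[\omega]\propto2^{\kappa(\omega)}\prod_{e\in\omega}p_e\prod_{e\notin\omega}(1-p_e)$ is the random-cluster measure with $q=2$. *)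

(* Defs.v *)
From HB Require Import structures.
From mathcomp Require Import all_boot all_order all_algebra.
From mathcomp Require Import all_classical all_reals all_analysis.
Set Implicit Arguments. Unset Strict Implicit. Unset Printing Implicit Defensive.
Import Order.TTheory GRing.Theory Num.Theory.
Local Open Scope ring_scope.

(* Conventions.
   - V : finType is the vertex set; an edge is a 2-element subset {u,v} of V,
     the edge set is E : {set {set V}} (a finite simple graph).
   - A percolation configuration omega is identified with its set of open
     edges, omega : {set {set V}}; Omega = subsets of E.
   - A spin configuration is sigma : {ffun V -> bool}, true = +1, false = -1.
   - "x proportional to w" is rendered by explicit normalisation. *)

Section Defs.
Variable R : realType.
Variable V : finType.

Definition edge_set := {set {set V}}.
Definition spin_conf := {ffun V -> bool}.

Definition normalize (T : finType) (w : T -> R) (x : T) : R :=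
  w x / \sum_(y : T) w y.

Definition spin (b : bool) : R := if b then 1 else -1.

Definition pJ (J : {set V} -> R) (e : {set V}) : R := 1 - expR (- (2 * J e)).

Definition Sset (E : edge_set) (sigma : spin_conf) : edge_set :=
  [set e in E | [forall u in e, forall v in e, sigma u == sigma v]].

Definition deg (F : edge_set) (v : V) : nat := #|[set e in F | v \in e]|.
Definition boundary (F : edge_set) : {set V} := [set v | odd (deg F v)].

Definition FA (A : {set V}) (omega : edge_set) : bool :=
  [exists F : edge_set, (F \subset omega) && (boundary F == A)].

Definition adj (omega : edge_set) : rel V := fun u v => [set u; v] \in omega.
Definition kappa (omega : edge_set) : nat :=
  n_comp (connect (adj omega)) (fun _ : V => true).

Definition PH (p : {set V} -> R) (H : edge_set) (omega : edge_set) : R :=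
  (omega \subset H)%:R *
  (\prod_(e in omega) p e) * (\prod_(e in H :\: omega) (1 - p e)).

Definition PE (p : {set V} -> R) (E : edge_set) (omega : edge_set) : R :=
  PH p E omega.

Definition PH_event (p : {set V} -> R) (H : edge_set) (ev : pred edge_set) : R :=
  \sum_(omega : edge_set | ev omega) PH p H omega.

Definition ising_w (E : edge_set) (J : {set V} -> R) (sigma : spin_conf) : R :=
  expR (\sum_(e in E) J e * \prod_(v in e) spin (sigma v)).
Definition mu (E : edge_set) (J : {set V} -> R) (sigma : spin_conf) : R :=
  normalize (ising_w E J) sigma.

Definition phi (E : edge_set) (p : {set V} -> R) (omega : edge_set) : R :=
  normalize (fun w => 2 ^+ kappa w * PE p E w) omega.

Definition cond_event (m : edge_set -> R) (ev : pred edge_set) (omega : edge_set) : R :=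
  (ev omega)%:R * m omega / \sum_(w : edge_set | ev w) m w.

Definition fmap (E : edge_set) (omega : edge_set) : {set spin_conf} :=
  [set sigma : spin_conf | [forall e in E, (e \notin Sset E sigma) ==> (e \notin omega)]].

Definition rho (E : edge_set) (p : {set V} -> R) (A : {set V}) (omega : edge_set) : R :=
  normalize (fun w => (FA A w)%:R * PE p E w) omega.
Definition gamma (sigma : spin_conf) : R := normalize (fun _ : spin_conf => 1) sigma.

Definition Pjoint (E : edge_set) (p : {set V} -> R) (A : {set V})
  (omega : edge_set) (sigma : spin_conf) : R :=
  normalize (fun x : edge_set * spin_conf =>
      rho E p A x.1 * gamma x.2 * (x.2 \in fmap E x.1)%:R) (omega, sigma).

Definition Pcond_omega E p A (omega : edge_set) (sigma : spin_conf) : R :=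
  Pjoint E p A omega sigma / \sum_(s : spin_conf) Pjoint E p A omega s.
Definition Pcond_sigma E p A (sigma : spin_conf) (omega : edge_set) : R :=
  Pjoint E p A omega sigma / \sum_(w : edge_set) Pjoint E p A w sigma.

Definition muA (E : edge_set) (J : {set V} -> R) (A : {set V}) (sigma : spin_conf) : R :=
  normalize (fun s => mu E J s * PH_event (pJ J) (Sset E s) (FA A)) sigma.

(* law of the spin configuration obtained by assigning independent uniform
   signs to the open clusters of omega: draw independent uniform signs tau(x)
   for all vertices x and give every vertex the sign of the root (canonical
   representative) of its open cluster. *)
Definition cluster_sign_law (omega : edge_set) (sigma : spin_conf) : R :=
  #|[set tau : {ffun V -> bool} |
      [ffun v => tau (fingraph.root (connect (adj omega)) v)] == sigma]|%:R
  / 2 ^+ #|V|.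

End Defs.

(* Main.v *)
Require Import Defs.
From HB Require Import structures.
From mathcomp Require Import all_boot all_order all_algebra.
From mathcomp Require Import all_classical all_reals all_analysis.
From mathcomp Require Import ring lra.
Import Order.TTheory GRing.Theory Num.Theory.
Local Open Scope ring_scope.

Section Aux.
Variables (R : realType) (V : finType) (E : {set {set V}}) (J : {set V} -> R).
Hypothesis HE : forall e, e \in E -> #|e| = 2%N.
Hypothesis HJ : forall e, e \in E -> 0 < J e.

Let p := pJ J.

Lemma oneBp e : 1 - p e = expR (- (2 * J e)).
Proof. by rewrite /p /pJ opprB addrC subrK. Qed.

Lemma p_gt0 e : e \in E -> 0 < p e.
Proof.
move=> he; rewrite /p /pJ subr_gt0 expR_lt1 oppr_lt0 mulr_gt0 //; exact: HJ.
Qed.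

Lemma q_gt0 e : 0 < 1 - p e.
Proof. by rewrite oneBp expR_gt0. Qed.

Lemma PH_ge0 (H w : edge_set V) : H \subset E -> 0 <= PH p H w.
Proof.
move=> HsE; rewrite /PH; apply: mulr_ge0; last first.
  by apply: prodr_ge0 => e _; exact: ltW (q_gt0 e).
case: (boolP (w \subset H)) => hw; last by rewrite mul0r.
rewrite mul1r; apply: prodr_ge0 => e he; apply: ltW; apply: p_gt0.
exact: (fintype.subsetP HsE _ (fintype.subsetP hw _ he)).
Qed.

Lemma PH_gt0 (H w : edge_set V) : H \subset E -> w \subset H -> 0 < PH p H w.
Proof.
move=> HsE hw; rewrite /PH hw mul1r; apply: mulr_gt0.
  apply: prodr_gt0 => e he; apply: p_gt0.
  exact: (fintype.subsetP HsE _ (fintype.subsetP hw _ he)).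
by apply: prodr_gt0 => e _; exact: q_gt0.
Qed.

Definition Kc (sigma : spin_conf V) := \prod_(e in E :\: Sset E sigma) (1 - p e).

Lemma Kc_gt0 (sigma : spin_conf V) : 0 < Kc sigma.
Proof. by apply: prodr_gt0 => e _; exact: q_gt0. Qed.

Lemma SsubE (sigma : spin_conf V) : Sset E sigma \subset E.
Proof. by apply/fintype.subsetP => e; rewrite inE => /andP[]. Qed.

Lemma factor (w : edge_set V) (sigma : spin_conf V) :
  PE p E w * (sigma \in Defs.fmap E w)%:R = Kc sigma * PH p (Sset E sigma) w.
Proof.
set S := Sset E sigma.
have hSE := SsubE sigma.
case: (boolP (w \subset S)) => hwS.
  have hwE : w \subset E := fintype.subset_trans hwS hSE.
  have hf : sigma \in Defs.fmap E w.
    rewrite inE; apply/forall_inP => e he; apply/implyP => heS.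
    by apply: contra heS => hew; exact: (fintype.subsetP hwS).
  rewrite hf mulr1 /PE /PH hwS hwE !mul1r /Kc.
  rewrite [\prod_(e in E :\: w) _](bigID (fun e => e \in S)) /=.
  have eA : \prod_(i in E :\: w | i \in S) (1 - p i) = \prod_(e in S :\: w) (1 - p e).
    apply: eq_bigl => e; rewrite !finset.in_setD; case: (boolP (e \in S)) => heS /=.
      by rewrite (fintype.subsetP hSE _ heS) !andbT.
    by rewrite !andbF.
  have eB : \prod_(i in E :\: w | i \notin S) (1 - p i) = \prod_(e in E :\: S) (1 - p e).
    apply: eq_bigl => e; rewrite !finset.in_setD; case: (boolP (e \in S)) => heS /=.
      by rewrite !andbF.
    have -> : (e \notin w) by apply: contra heS; exact: (fintype.subsetP hwS).
    by rewrite !andbT.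
  rewrite eA eB; ring.
rewrite /PH (negbTE hwS) mul0r mul0r mulr0.
case: (boolP (w \subset E)) => hwE; last by rewrite /PE /PH (negbTE hwE) !mul0r.
have -> : (sigma \in Defs.fmap E w) = false.
  apply/negbTE; rewrite inE; apply/negP => /forall_inP h.
  case/fintype.subsetPn: hwS => e hew heS.
  by have := h e (fintype.subsetP hwE _ hew); rewrite heS hew.
by rewrite mulr0.
Qed.


Lemma spin_prod (sigma : spin_conf V) e : e \in E ->
  \prod_(v in e) spin R (sigma v) = if e \in Sset E sigma then 1 else -1.
Proof.
move=> he; have /eqP/cards2P [x [y [xy exy]]] := HE _ he.
rewrite [in LHS]exy big_setU1 ?big_set1 /=; last by rewrite inE.
rewrite inE he /=.
have -> : [forall (u | u \in e), forall (v | v \in e), sigma u == sigma v]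
          = (sigma x == sigma y).
  apply/idP/idP.
    move/forall_inP => /(_ x); rewrite exy set21 => /(_ isT) /forall_inP /(_ y).
    by rewrite set22 => /(_ isT).
  move/eqP => hxy; apply/forall_inP => u; rewrite exy !inE => /orP[]/eqP->;
    apply/forall_inP => v; rewrite !inE => /orP[]/eqP->; by rewrite ?hxy.
by rewrite /spin; case: (sigma x); case: (sigma y); rewrite /= ?mulr1 ?mulrN1 ?opprK.
Qed.

Lemma K_eq (sigma : spin_conf V) :
  Kc sigma = ising_w E J sigma * expR (- \sum_(e in E) J e).
Proof.
rewrite /Kc /ising_w.
under eq_bigr => e _ do rewrite oneBp.
rewrite -expR_sum -expRD; congr expR.
rewrite -sumrN -big_split /=.
rewrite [RHS](eq_bigr (fun e => if e \in Sset E sigma then 0 else - (2 * J e))); last first.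
  by move=> e he; rewrite spin_prod //; case: ifP => _; ring.
rewrite big_mkcond [RHS]big_mkcond; apply: eq_bigr => e _.
by rewrite finset.in_setD; case: (e \in Sset E sigma); case: (e \in E).
Qed.

Lemma adj_sym (w : edge_set V) : symmetric (adj w).
Proof. by move=> u v; rewrite /adj finset.setUC. Qed.

Lemma ce_sym (w : edge_set V) : connect_sym (connect (adj w)).
Proof. apply: sym_connect_sym; exact: sym_connect_sym (adj_sym w). Qed.

Lemma fmapP (w : edge_set V) (sigma : spin_conf V) : w \subset E ->
  reflect (forall u v, adj w u v -> sigma u = sigma v) (sigma \in Defs.fmap E w).
Proof.
move=> hwE; apply: (iffP idP).
  rewrite inE => /forall_inP h u v huv.
  have he : [set u; v] \in E := fintype.subsetP hwE _ huv.
  have := h _ he; rewrite /adj in huv; rewrite huv implybF negbK inE he /=.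
  move/forall_inP => /(_ u); rewrite set21 => /(_ isT) /forall_inP /(_ v).
  by rewrite set22 => /(_ isT) /eqP.
move=> h; rewrite inE; apply/forall_inP => e he; apply/implyP => heS; apply/negP => hew.
have /eqP/cards2P [x [y [xy exy]]] := HE _ he.
have hxy : sigma x = sigma y by apply: h; rewrite /adj -exy.
case/negP: heS; rewrite inE he /=; apply/forall_inP => a ha; apply/forall_inP => b hb.
apply/eqP; move: ha hb; rewrite exy !inE => /orP[]/eqP-> /orP[]/eqP->; by rewrite ?hxy.
Qed.

Lemma fmap_root (w : edge_set V) (sigma : spin_conf V) : w \subset E ->
  (sigma \in Defs.fmap E w) = (sigma == [ffun v => sigma (fingraph.root (connect (adj w)) v)]).
Proof.
move=> hwE; set c := connect (adj w); apply/idP/idP.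
  move/(fmapP _ _ hwE) => h; apply/eqP/ffunP => v; rewrite ffunE.
  have cl1 : closed_mem (adj w) (mem [pred z | sigma z]).
    by move=> x y /h; rewrite !inE => ->.
  have cl2 : closed_mem c (mem [pred z | sigma z]).
    by move=> x y /(closed_connect cl1).
  have := closed_connect cl2 (connect_root c v).
  by rewrite !inE.
move/eqP => hs; apply/(fmapP _ _ hwE) => u v huv; rewrite hs !ffunE.
have -> : fingraph.root c u = fingraph.root c v.
  apply/(fingraph.rootP (ce_sym w)); apply: connect1; exact: connect1 huv.
by [].
Qed.

Definition Tset (w : edge_set V) (sigma : spin_conf V) : {set {ffun V -> bool}} :=
  [set tau : {ffun V -> bool} |
      [ffun v => tau (fingraph.root (connect (adj w)) v)] == sigma].

Lemma root_fmap (w : edge_set V) (sigma : spin_conf V) v : w \subset E ->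
  sigma \in Defs.fmap E w -> sigma (fingraph.root (connect (adj w)) v) = sigma v.
Proof.
move=> hwE; rewrite fmap_root // => /eqP hs.
by rewrite [in RHS]hs ffunE.
Qed.

Lemma T_fmap (w : edge_set V) (sigma : spin_conf V) tau : w \subset E ->
  tau \in Tset w sigma -> sigma \in Defs.fmap E w.
Proof.
move=> hwE; rewrite inE => /eqP <-; rewrite fmap_root //; apply/eqP/ffunP => v.
by rewrite !ffunE (fingraph.root_root (ce_sym w)).
Qed.

Lemma T_le (w : edge_set V) (s1 s2 : spin_conf V) : w \subset E ->
  s1 \in Defs.fmap E w -> s2 \in Defs.fmap E w -> (#|Tset w s1| <= #|Tset w s2|)%N.
Proof.
move=> hwE h1 h2.
pose g (tau : {ffun V -> bool}) : {ffun V -> bool} := [ffun x => tau x (+) s1 x (+) s2 x].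
have ginj : injective g.
  move=> t1 t2 heq; apply/ffunP => x; have := congr1 (fun f : {ffun V -> bool} => f x) heq.
  by rewrite /g !ffunE; case: (t1 x); case: (t2 x); case: (s1 x); case: (s2 x).
rewrite -(finset.card_imset _ ginj); apply: fintype.subset_leq_card.
apply/fintype.subsetP => _ /finset.imsetP [tau htau ->].
move: htau; rewrite !inE => /eqP htau; apply/eqP/ffunP => v.
have hv := congr1 (fun f : {ffun V -> bool} => f v) htau; rewrite /= ffunE in hv.
rewrite !ffunE hv (root_fmap _ _ _ hwE h1) (root_fmap _ _ _ hwE h2).
by case: (s1 v); case: (s2 v).
Qed.

Lemma T_sum (w : edge_set V) : (\sum_(sigma : spin_conf V) #|Tset w sigma| = 2 ^ #|V|)%N.
Proof.
set F := fun tau : {ffun V -> bool} => [ffun v => tau (fingraph.root (connect (adj w)) v)].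
transitivity (\sum_(sigma : spin_conf V) \sum_(tau : {ffun V -> bool}) ((F tau == sigma) : nat))%N.
  apply: eq_bigr => sigma _; rewrite -sum1_card big_mkcond /=; apply: eq_bigr => tau _.
  by rewrite inE; case: (_ == _).
rewrite exchange_big /=.
transitivity (\sum_(tau : {ffun V -> bool}) 1)%N.
  apply: eq_bigr => tau _; rewrite (bigD1 (F tau)) //= eqxx big1 // => sigma.
  by rewrite eq_sym => /negbTE ->.
by rewrite sum1_card card_ffun card_bool.
Qed.

Lemma card_f_N (w : edge_set V) : w \subset E ->
  (#|Defs.fmap E w| * #|Tset w [ffun => true]| = 2 ^ #|V|)%N.
Proof.
move=> hwE; set s0 : spin_conf V := [ffun => true].
have h0 : s0 \in Defs.fmap E w.
  by rewrite fmap_root //; apply/eqP/ffunP => v; rewrite !ffunE.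
rewrite -(T_sum w) -sum_nat_const [LHS]big_mkcond /=; apply: eq_bigr => sigma _.
case: ifP => hs.
  by apply/eqP; rewrite eqn_leq !T_le.
apply/esym/eqP; rewrite cards_eq0; apply/eqP/setP => tau; rewrite finset.in_set0.
by apply/negP => /(T_fmap _ _ _ hwE); rewrite hs.
Qed.

Lemma cluster_eq (w : edge_set V) (sigma : spin_conf V) : w \subset E ->
  cluster_sign_law R w sigma = (sigma \in Defs.fmap E w)%:R / #|Defs.fmap E w|%:R.
Proof.
move=> hwE; rewrite /cluster_sign_law -/(Tset w sigma).
have hN := card_f_N _ hwE; set N := #|Tset w _| in hN.
have -> : 2 ^+ #|V| = (2 ^ #|V|)%:R :> R by rewrite natrX.
have hpos : (0 < 2 ^ #|V|)%N by rewrite expn_gt0.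
rewrite -hN natrM.
have hN0 : N%:R != 0 :> R.
  by rewrite pnatr_eq0; apply/eqP => h0; move: hpos; rewrite -hN h0 muln0.
have hf0 : #|Defs.fmap E w|%:R != 0 :> R.
  by rewrite pnatr_eq0; apply/eqP => h0; move: hpos; rewrite -hN h0 mul0n.
case: (boolP (sigma \in Defs.fmap E w)) => hs.
  have -> : #|Tset w sigma| = N.
    have h0 : [ffun => true] \in Defs.fmap E w.
      by rewrite fmap_root //; apply/eqP/ffunP => v; rewrite !ffunE.
    by apply/eqP; rewrite eqn_leq !T_le.
  by rewrite /= invfM mulrCA mulfV // mulr1 mul1r.
have -> : #|Tset w sigma| = 0%N.
  apply/eqP; rewrite cards_eq0; apply/eqP/setP => tau; rewrite finset.in_set0.
  by apply/negP => /(T_fmap _ _ _ hwE); rewrite (negbTE hs).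
by rewrite !mul0r.
Qed.

Lemma card_fmap (w : edge_set V) : w \subset E -> #|Defs.fmap E w| = (2 ^ kappa w)%N.
Proof.
move=> hwE; set c := connect (adj w).
set K := [set x | fingraph.roots c x].
have hk : kappa w = #|K|.
  by rewrite /kappa /n_comp_mem; apply: eq_card => x; rewrite !inE andbT.
pose h (S : {set V}) : spin_conf V := [ffun v => fingraph.root c v \in S].
have hinj : {in powerset K &, injective h}.
  move=> S1 S2; rewrite !powersetE => h1 h2 heq; apply/finset.setP => x.
  case: (boolP (x \in K)) => hx.
    have r : fingraph.root c x = x by move: hx; rewrite inE => /eqP.
    by have := congr1 (fun f : spin_conf V => f x) heq; rewrite /h !ffunE r.
  have n1 : x \notin S1 by apply: contra hx; exact: (fintype.subsetP h1).
  have n2 : x \notin S2 by apply: contra hx; exact: (fintype.subsetP h2).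
  by rewrite (negbTE n1) (negbTE n2).
rewrite hk -card_powerset -(finset.card_in_imset hinj).
suff -> : Defs.fmap E w = h @: powerset K by [].
apply/finset.setP => sigma; apply/idP/finset.imsetP.
  move=> hs; exists [set x in K | sigma x].
    by rewrite powersetE; apply/fintype.subsetP => x; rewrite inE => /andP[].
  apply/ffunP => v; rewrite ffunE inE.
  rewrite inE (fingraph.roots_root (ce_sym w)) /=.
  by rewrite (root_fmap _ _ _ hwE hs).
case => S hS ->; rewrite fmap_root //; apply/eqP/ffunP => v.
by rewrite !ffunE (fingraph.root_root (ce_sym w)).
Qed.

End Aux.

Lemma norm_scale (R : realType) (T : finType) (c : R) (g : T -> R) x :
  (c = 0 -> forall y, g y = 0) -> c * g x / \sum_y c * g y = g x / \sum_y g y.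
Proof.
move=> h; case: (eqVneq c 0) => [c0|cn0].
  by rewrite (h c0 x) c0 !mul0r.
by rewrite -mulr_sumr invfM mulrACA mulfV // mul1r.
Qed.

Lemma divZ (R : realType) (T : finType) (Z a : R) (b : T -> R) :
  Z != 0 -> (a / Z) / (\sum_i b i / Z) = a / \sum_i b i.
Proof. by move=> hz; rewrite -mulr_suml invfM invrK mulrACA mulVf // mulr1. Qed.

Lemma sum_ind (R : realType) (T : finType) (P : pred T) (F : T -> R) :
  \sum_(i | P i) F i = \sum_i (P i)%:R * F i.
Proof. rewrite big_mkcond; apply: eq_bigr => i _; by case: (P i); rewrite ?mul1r ?mul0r. Qed.

Lemma sum_card (R : realType) (T : finType) (A : {set T}) :
  \sum_i (i \in A)%:R = #|A|%:R :> R.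
Proof.
transitivity (\sum_(i in A) (1 : R)); last by rewrite sumr_const.
by rewrite [RHS]big_mkcond; apply: eq_bigr => i _; case: (i \in A).
Qed.

Theorem propositionB1 (R : realType) (V : finType) (E : {set {set V}})
  (J : {set V} -> R) (A : {set V})
  (HE : forall e, e \in E -> #|e| = 2%N)
  (HJ : forall e, e \in E -> 0 < J e)
  (HA : ~~ odd #|A|) :
  let p := pJ J in
  (* (a) *)
  ((forall sigma : spin_conf V,
      \sum_(omega : edge_set V) Pjoint E p A omega sigma = muA E J A sigma)
   /\ (forall omega : edge_set V, omega \subset E -> FA A omega ->
      forall sigma : spin_conf V,
        Pcond_omega E p A omega sigma = cluster_sign_law R omega sigma))
  /\
  (* (b) *)
  ((forall omega : edge_set V,
      \sum_(sigma : spin_conf V) Pjoint E p A omega sigma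
      = cond_event (phi E p) (FA A) omega)
   /\ (forall sigma : spin_conf V, FA A (Sset E sigma) ->
      forall omega : edge_set V,
        Pcond_sigma E p A sigma omega
        = cond_event (PH p (Sset E sigma)) (FA A) omega)).
Proof.
move=> p; rewrite /p.
pose g0 : R := 1 / \sum_(y : spin_conf V) (1 : R).
have g0n : g0 != 0.
  rewrite /g0 div1r invr_eq0; apply/eqP => h.
  have := psumr_eq0P (fun _ _ => ler01) h (i := [ffun => true]) isT.
  by move/eqP; rewrite oner_eq0.
set Zr := \sum_(w : edge_set V) (FA A w)%:R * PE (pJ J) E w.
have hnn : forall w : edge_set V, true -> 0 <= (FA A w)%:R * PE (pJ J) E w.
  by move=> w _; apply: mulr_ge0; [exact: ler0n | exact: (PH_ge0 _ _ _ _ HJ _ _ (fintype.subxx E))].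
have Zr_ge0 : 0 <= Zr := sumr_ge0 _ hnn.
pose W w s := rho E (pJ J) A w * gamma R s * (s \in Defs.fmap E w)%:R.
have hW : forall w s, W w s = g0 / Zr * ((FA A w)%:R * (PE (pJ J) E w * (s \in Defs.fmap E w)%:R)).
  by move=> w s; rewrite /W /rho /gamma /normalize -/Zr /g0; ring.
have W_ge0 : forall w s, 0 <= W w s.
  move=> w s; rewrite hW; apply: mulr_ge0.
    apply: mulr_ge0; last by rewrite invr_ge0.
    by rewrite /g0 div1r invr_ge0; apply: sumr_ge0 => i _; exact: ler01.
  apply: mulr_ge0; first exact: ler0n.
  apply: mulr_ge0; [exact: (PH_ge0 _ _ _ _ HJ _ _ (fintype.subxx E)) | exact: ler0n].
set Z := \sum_w \sum_s W w s.
have hPj : forall w s, Pjoint E (pJ J) A w s = W w s / Z.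
  by move=> w s; rewrite /Z pair_bigA.
have hZ : forall w s, W w s != 0 -> Z != 0.
  move=> w s hws; apply/eqP => z.
  have h1 := psumr_eq0P (fun w _ => sumr_ge0 _ (fun s _ => W_ge0 w s)) z (i := w) isT.
  have h2 := psumr_eq0P (fun s _ => W_ge0 w s) h1 (i := s) isT.
  by rewrite h2 eqxx in hws.
have hZr0 : Zr = 0 -> forall w, (FA A w)%:R * PE (pJ J) E w = 0.
  by move=> z w; exact: (psumr_eq0P hnn z (i := w) isT).
have PHev0 : Zr = 0 -> forall y, PH_event (pJ J) (Sset E y) (FA A) = 0.
  move=> z y; rewrite /PH_event big1 // => w hw.
  have h := hZr0 z w; rewrite hw mul1r in h.
  have := factor R V E J w y; rewrite h mul0r => /esym/eqP.
  by rewrite mulf_eq0 gt_eqF ?Kc_gt0 //= => /eqP.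
split; split.
- move=> sigma.
  have Zmu0 : \sum_s ising_w E J s != 0.
    apply/eqP => z; have := psumr_eq0P (fun s _ => ltW (expR_gt0 _)) z (i := sigma) isT.
    by rewrite /ising_w => /eqP; rewrite gt_eqF // expR_gt0.
  set c := g0 / Zr * (expR (- \sum_(e in E) J e) * \sum_s ising_w E J s).
  pose gg s := mu E J s * PH_event (pJ J) (Sset E s) (FA A).
  have hM : forall s, \sum_w W w s = c * gg s.
    move=> s; under eq_bigr => w _ do rewrite hW factor.
    rewrite -mulr_sumr.
    have -> : \sum_w (FA A w)%:R * (Kc R V E J s * PH (pJ J) (Sset E s) w)
              = Kc R V E J s * PH_event (pJ J) (Sset E s) (FA A).
      by rewrite /PH_event (sum_ind _ _ (FA A)) mulr_sumr; apply: eq_bigr => w _; ring.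
    rewrite (K_eq _ _ _ _ HE) /gg /mu /normalize /c.
    set a := g0 / Zr; by field.
  under eq_bigr do rewrite hPj.
  rewrite -mulr_suml hM /Z exchange_big /=.
  under [X in _ / X]eq_bigr => s _ do rewrite hM.
  rewrite norm_scale //.
  move=> c0 y; move/eqP: c0; rewrite /c mulf_eq0 (mulf_eq0 g0) (negbTE g0n) invr_eq0 mulf_eq0 (negbTE Zmu0) (gt_eqF (expR_gt0 _)) /=.
  rewrite !orbF => /eqP z.
  by rewrite /gg (PHev0 z) mulr0.
- move=> w hwE hFA sigma; rewrite /Pcond_omega.
  have Zr_n0 : Zr != 0.
    apply/eqP => z; have := hZr0 z w; rewrite hFA mul1r; apply/eqP.
    exact: lt0r_neq0 (PH_gt0 _ _ _ _ HJ _ _ (fintype.subxx E) hwE).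
  have hWs : forall s, W w s = (g0 / Zr * PE (pJ J) E w) * (s \in Defs.fmap E w)%:R.
    by move=> s; rewrite hW hFA mul1r mulrA.
  have r0 : g0 / Zr * PE (pJ J) E w != 0.
    apply: mulf_neq0; first by rewrite mulf_neq0 ?invr_eq0.
    exact: lt0r_neq0 (PH_gt0 _ _ _ _ HJ _ _ (fintype.subxx E) hwE).
  have hs0 : [ffun => true] \in Defs.fmap E w.
    by rewrite (fmap_root _ _ HE) //; apply/eqP/ffunP => v; rewrite !ffunE.
  have hZn : Z != 0 by apply: (hZ w [ffun => true]); rewrite hWs hs0 mulr1.
  rewrite hPj; under eq_bigr do rewrite hPj.
  rewrite divZ //.
  under eq_bigr do rewrite hWs.
  rewrite hWs -mulr_sumr sum_card (cluster_eq _ _ _ HE) //.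
  by rewrite invfM mulrACA mulfV // mul1r.
- move=> w; rewrite /cond_event.
  under eq_bigr do rewrite hPj.
  rewrite -mulr_suml.
  pose q (w : edge_set V) := (FA A w)%:R * (2 ^+ kappa w * PE (pJ J) E w).
  have hq : forall w, \sum_s W w s = g0 / Zr * q w.
    move=> w'; under eq_bigr do rewrite hW; rewrite -mulr_sumr; congr (_ * _).
    rewrite -mulr_sumr -mulr_sumr sum_card /q.
    case: (boolP (w' \subset E)) => h.
      by rewrite (card_fmap _ _ HE) // natrX; ring.
    have -> : PE (pJ J) E w' = 0 by rewrite /PE /PH (negbTE h) !mul0r.
    by rewrite !mul0r !mulr0.
  have hZq : Z = \sum_w g0 / Zr * q w by rewrite /Z; apply: eq_bigr => w' _; exact: hq.
  rewrite hZq hq norm_scale; last first.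
    move=> c0 y; move/eqP: c0; rewrite mulf_eq0 invr_eq0 (negbTE g0n) /= => /eqP z.
    by rewrite /q mulrCA (hZr0 z) mulr0.
  rewrite (sum_ind _ _ (FA A)) /phi /normalize /=.
  set Zp := \sum_y 2 ^+ kappa y * PE (pJ J) E y.
  have e1 : forall w', (FA A w')%:R * (2 ^+ kappa w' * PE (pJ J) E w' / Zp) = Zp^-1 * q w'.
    by move=> w'; rewrite /q; ring.
  under [X in _ = _ / X]eq_bigr do rewrite e1.
  rewrite e1 norm_scale //.
  move=> /eqP; rewrite invr_eq0 => /eqP z y.
  have hp : forall y : edge_set V, true -> 0 <= 2 ^+ kappa y * PE (pJ J) E y.
    move=> y' _; apply: mulr_ge0; first by apply: exprn_ge0.
    exact: (PH_ge0 _ _ _ _ HJ _ _ (fintype.subxx E)).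
  by rewrite /q (psumr_eq0P hp z (i := y) isT) mulr0.
- move=> sigma hS w; rewrite /Pcond_sigma /cond_event.
  set S := Sset E sigma.
  have hSE : S \subset E := SsubE V E sigma.
  have Zr_n0 : Zr != 0.
    apply/eqP => z; have := hZr0 z S; rewrite hS mul1r; apply/eqP.
    exact: lt0r_neq0 (PH_gt0 _ _ _ _ HJ _ _ (fintype.subxx E) hSE).
  have hWw : forall w', W w' sigma = (g0 / Zr * Kc R V E J sigma) * ((FA A w')%:R * PH (pJ J) S w').
    by move=> w'; rewrite hW factor; ring.
  have c0 : g0 / Zr * Kc R V E J sigma != 0.
    apply: mulf_neq0; first by rewrite mulf_neq0 ?invr_eq0.
    exact: lt0r_neq0 (Kc_gt0 _ _ _ _ _).
  have hZn : Z != 0.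
    apply: (hZ S sigma); rewrite hWw hS mul1r; apply: mulf_neq0 => //.
    exact: lt0r_neq0 (PH_gt0 _ _ _ _ HJ _ _ hSE (fintype.subxx S)).
  rewrite hPj; under eq_bigr do rewrite hPj.
  rewrite divZ //.
  under eq_bigr do rewrite hWw.
  rewrite hWw norm_scale; last by move=> h0; move: c0; rewrite h0 eqxx.
  by rewrite (sum_ind _ _ (FA A)).
Qed.
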